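(* Let $E$ be a semi-Montel space, $G\subset E'$ a linear subspace that determines boundedness, $\Omega\subset\mathbb{R}^d$ open and $k\in\mathbb{N}$. If $f\colon\Omega\to E$ is such that $e'\circ f\in\mathcal{C}^k(\Omega)$ for all $e'\in G$, then $f\in\mathcal{C}^k(\Omega,E)$.
   Context: $\mathbb{K}\in\{\mathbb{R},\mathbb{C}\}$. A semi-Montel space is a locally convex Hausdorff space over $\mathbb{K}$ in which every bounded set is relatively compact. $G\subset E'$ determines boundedness if every $\sigma(E,G)$-bounded subset of $E$ is bounded in $E$. $f\colon\Omega\to E$ is $\mathcal{C}^1$ if for each unit vector $e_n$ the limit $(\partial^{e_n})^Ef(x)=\lim_{h\to0,h\in\mathbb{R}\setminus\{0\}}(f(x+he_n)-f(x))/h$ exists in $E$ for all $x\in\Omega$ and is continuous in $x$; $\mathcal{C}^k$ is defined inductively (f is $\mathcal{C}^1$ and all first partial derivatives are $\mathcal{C}^{k-1}$). $\mathcal{C}^k(\Omega)$ is the scalar case. *)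

(* Defs.v *)
(* classical reals.  Locally convex spaces are represented,
   as usual, by a separating family of continuous seminorms. *)
From Stdlib Require Import Reals Lra List.
From Stdlib Require Vectors.Fin.
Open Scope R_scope.

Inductive Kfield : Type := KR | KC.

(* C is modelled as R * R (real part, imaginary part). *)
Definition Kty (k : Kfield) : Type :=
  match k with KR => R | KC => (R * R)%type end.

Definition Kadd (k : Kfield) : Kty k -> Kty k -> Kty k :=
  match k return Kty k -> Kty k -> Kty k with
  | KR => Rplus
  | KC => fun x y => (fst x + fst y, snd x + snd y)
  end.

Definition Kmul (k : Kfield) : Kty k -> Kty k -> Kty k :=
  match k return Kty k -> Kty k -> Kty k with
  | KR => Rmult
  | KC => fun x y => (fst x * fst y - snd x * snd y, fst x * snd y + snd x * fst y)
  end.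

Definition Kopp (k : Kfield) : Kty k -> Kty k :=
  match k return Kty k -> Kty k with
  | KR => Ropp
  | KC => fun x => (- fst x, - snd x)
  end.

Definition K0 (k : Kfield) : Kty k :=
  match k return Kty k with KR => 0 | KC => (0, 0) end.

Definition K1 (k : Kfield) : Kty k :=
  match k return Kty k with KR => 1 | KC => (1, 0) end.

Definition KofR (k : Kfield) : R -> Kty k :=
  match k return R -> Kty k with KR => fun r => r | KC => fun r => (r, 0) end.

Definition Kabs (k : Kfield) : Kty k -> R :=
  match k return Kty k -> R with
  | KR => Rabs
  | KC => fun x => sqrt (fst x * fst x + snd x * snd x)
  end.

Definition Ksub (k : Kfield) (x y : Kty k) : Kty k := Kadd k x (Kopp k y).

Record LCS (k : Kfield) : Type := {
  car : Type;
  vadd : car -> car -> car;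
  vzero : car;
  vopp : car -> car;
  vscal : Kty k -> car -> car;
  idx : Type;
  sn : idx -> car -> R
}.
Arguments car {k}. Arguments vadd {k}. Arguments vzero {k}. Arguments vopp {k}.
Arguments vscal {k}. Arguments idx {k}. Arguments sn {k}.

Definition vsub {k} (E : LCS k) (x y : car E) : car E := vadd E x (vopp E y).

Definition is_lcs {k} (E : LCS k) : Prop :=
  (forall x y z, vadd E x (vadd E y z) = vadd E (vadd E x y) z) /\
  (forall x y, vadd E x y = vadd E y x) /\
  (forall x, vadd E x (vzero E) = x) /\
  (forall x, vadd E x (vopp E x) = vzero E) /\
  (forall a b x, vscal E a (vscal E b x) = vscal E (Kmul k a b) x) /\
  (forall x, vscal E (K1 k) x = x) /\
  (forall a x y, vscal E a (vadd E x y) = vadd E (vscal E a x) (vscal E a y)) /\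
  (forall a b x, vscal E (Kadd k a b) x = vadd E (vscal E a x) (vscal E b x)) /\
  (forall i x, 0 <= sn E i x) /\
  (forall i x y, sn E i (vadd E x y) <= sn E i x + sn E i y) /\
  (forall i a x, sn E i (vscal E a x) = Kabs k a * sn E i x) /\
  (forall x, (forall i, sn E i x = 0) -> x = vzero E).

Definition in_ball {k} (E : LCS k) (l : list (idx E)) (r : R) (x y : car E) : Prop :=
  forall i, In i l -> sn E i (vsub E y x) < r.

Definition is_open {k} (E : LCS k) (U : car E -> Prop) : Prop :=
  forall x, U x -> exists (l : list (idx E)) (r : R), 0 < r /\
    forall y, in_ball E l r x y -> U y.

Definition closure {k} (E : LCS k) (A : car E -> Prop) : car E -> Prop :=
  fun x => forall (l : list (idx E)) (r : R), 0 < r ->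
    exists y, A y /\ in_ball E l r x y.

Definition is_compact {k} (E : LCS k) (A : car E -> Prop) : Prop :=
  forall (C : (car E -> Prop) -> Prop),
    (forall U, C U -> is_open E U) ->
    (forall x, A x -> exists U, C U /\ U x) ->
    exists (L : list (car E -> Prop)),
      (forall U, In U L -> C U) /\ (forall x, A x -> exists U, In U L /\ U x).

Definition rel_compact {k} (E : LCS k) (A : car E -> Prop) : Prop :=
  is_compact E (closure E A).

Definition is_bounded {k} (E : LCS k) (A : car E -> Prop) : Prop :=
  forall i, exists M, forall x, A x -> sn E i x <= M.

Definition semi_Montel {k} (E : LCS k) : Prop :=
  forall A, is_bounded E A -> rel_compact E A.

Definition in_dual {k} (E : LCS k) (e : car E -> Kty k) : Prop :=
  (forall x y, e (vadd E x y) = Kadd k (e x) (e y)) /\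
  (forall a x, e (vscal E a x) = Kmul k a (e x)) /\
  (forall x eps, 0 < eps -> exists (l : list (idx E)) (r : R), 0 < r /\
     forall y, in_ball E l r x y -> Kabs k (Ksub k (e y) (e x)) < eps).

Definition dual_subspace {k} (E : LCS k) (G : (car E -> Kty k) -> Prop) : Prop :=
  (forall e, G e -> in_dual E e) /\
  G (fun _ => K0 k) /\
  (forall e1 e2, G e1 -> G e2 -> G (fun x => Kadd k (e1 x) (e2 x))) /\
  (forall a e, G e -> G (fun x => Kmul k a (e x))).

Definition weakly_bounded {k} (E : LCS k) (G : (car E -> Kty k) -> Prop)
  (A : car E -> Prop) : Prop :=
  forall e, G e -> exists M, forall x, A x -> Kabs k (e x) <= M.

Definition determines_boundedness {k} (E : LCS k) (G : (car E -> Kty k) -> Prop) : Prop :=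
  forall A, weakly_bounded E G A -> is_bounded E A.

Definition point (d : nat) : Type := Fin.t d -> R.

Definition open_Rd {d : nat} (Om : point d -> Prop) : Prop :=
  forall x, Om x -> exists r, 0 < r /\
    forall y : point d, (forall j, Rabs (y j - x j) < r) -> Om y.

Definition shift {d : nat} (x : point d) (n : Fin.t d) (h : R) : point d :=
  fun j => if Fin.eq_dec j n then x j + h else x j.

Section Ck.
Variables (V : Type) (vs : V -> V -> V) (rsc : R -> V -> V)
          (J : Type) (q : J -> V -> R) (d : nat) (Om : point d -> Prop).

Definition cont_on (f : point d -> V) : Prop :=
  forall x, Om x -> forall j eps, 0 < eps -> exists del, 0 < del /\
    forall y, Om y -> (forall m, Rabs (y m - x m) < del) -> q j (vs (f y) (f x)) < eps.

Definition has_partial (f : point d -> V) (n : Fin.t d) (x : point d) (v : V) : Prop :=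
  forall j eps, 0 < eps -> exists del, 0 < del /\
    forall h, h <> 0 -> Rabs h < del ->
      q j (vs (rsc (/ h) (vs (f (shift x n h)) (f x))) v) < eps.

Fixpoint Ck (m : nat) (f : point d -> V) : Prop :=
  match m with
  | 0%nat => cont_on f
  | S m' => exists g : Fin.t d -> point d -> V,
      (forall n x, Om x -> has_partial f n x (g n x)) /\
      (forall n, Ck m' (g n))
  end.
End Ck.

Definition CkE {k} (E : LCS k) (d : nat) (Om : point d -> Prop) (m : nat)
  (f : point d -> car E) : Prop :=
  Ck (car E) (vsub E) (fun h x => vscal E (KofR k h) x) (idx E) (sn E) d Om m f.

Definition CkK (k : Kfield) (d : nat) (Om : point d -> Prop) (m : nat)
  (f : point d -> Kty k) : Prop :=
  Ck (Kty k) (Ksub k) (fun h z => Kmul k (KofR k h) z) unit (fun _ z => Kabs k z) d Om m f.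

(* Main.v *)
Require Import Defs.
From Stdlib Require Import Reals.
From Stdlib Require Import Lra Lia List ClassicalEpsilon Classical.
From Coquelicot Require Import Complex.
Open Scope R_scope.

Lemma Kabs_C (z : Kty KC) : Kabs KC z = Cmod z.
Proof. destruct z as [a b]. unfold Kabs, Cmod; simpl. f_equal. ring. Qed.

Lemma Kabs_ge0 k (z : Kty k) : 0 <= Kabs k z.
Proof. destruct k; simpl. apply Rabs_pos. apply sqrt_pos. Qed.

Lemma Kabs_tri k (a b c : Kty k) :
  Kabs k (Ksub k a c) <= Kabs k (Ksub k a b) + Kabs k (Ksub k b c).
Proof.
  destruct k.
  - simpl. unfold Ksub; simpl. replace (a + - c) with ((a + - b) + (b + - c)) by ring.
    apply Rabs_triang.
  - rewrite !Kabs_C. destruct a as [a1 a2], b as [b1 b2], c as [c1 c2].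
    replace (Ksub KC (a1, a2) (c1, c2)) with
      (Cplus (Ksub KC (a1, a2) (b1, b2)) (Ksub KC (b1, b2) (c1, c2))).
    apply Cmod_triangle.
    unfold Ksub, Cplus; simpl. f_equal; ring.
Qed.

Lemma Kabs_sym k (a b : Kty k) : Kabs k (Ksub k a b) = Kabs k (Ksub k b a).
Proof.
  destruct k.
  - simpl. unfold Ksub; simpl. replace (a + - b) with (- (b + - a)) by ring. apply Rabs_Ropp.
  - rewrite !Kabs_C. destruct a as [a1 a2], b as [b1 b2].
    replace (Ksub KC (a1, a2) (b1, b2)) with (Copp (Ksub KC (b1, b2) (a1, a2))).
    apply Cmod_opp. unfold Ksub, Copp; simpl. f_equal; ring.
Qed.

Lemma Kabs_sub0 k (a b : Kty k) : Kabs k (Ksub k a b) = 0 -> a = b.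
Proof.
  destruct k; simpl; unfold Ksub; simpl.
  - intro H. change R in a, b. change (a = b). destruct (Req_dec (a + - b) 0). lra. apply Rabs_no_R0 in H0. lra.
  - destruct a as [a1 a2], b as [b1 b2]; simpl. intro H.
    apply sqrt_eq_0 in H; [|apply Rplus_le_le_0_compat; apply Rle_0_sqr].
    set (u := a1 + - b1) in *. set (v := a2 + - b2) in *.
    assert (u * u = 0) by (pose proof (Rle_0_sqr u); pose proof (Rle_0_sqr v); unfold Rsqr in *; lra).
    assert (v * v = 0) by (pose proof (Rle_0_sqr u); pose proof (Rle_0_sqr v); unfold Rsqr in *; lra).
    apply Rmult_integral in H0. apply Rmult_integral in H1.
    assert (a1 = b1) by (unfold u in H0; lra). assert (a2 = b2) by (unfold v in H1; lra). subst; auto.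
Qed.

Lemma Kabs_small k (a b : Kty k) : (forall eps, 0 < eps -> Kabs k (Ksub k a b) < eps) -> a = b.
Proof.
  intro H. apply Kabs_sub0. pose proof (Kabs_ge0 k (Ksub k a b)).
  destruct (Rle_lt_or_eq_dec _ _ H0); auto.
  specialize (H _ r). lra.
Qed.

Lemma Kabs_K0 k : Kabs k (K0 k) = 0.
Proof. destruct k; simpl. apply Rabs_R0. rewrite Rmult_0_l, Rplus_0_l. apply sqrt_0. Qed.

Lemma Kabs_KofR k t : Kabs k (KofR k t) = Rabs t.
Proof. destruct k; simpl; auto. rewrite Rmult_0_l, Rplus_0_r. apply sqrt_Rsqr_abs. Qed.

Lemma Kabs_bound k (a L : Kty k) : Kabs k a <= Kabs k (Ksub k a L) + Kabs k L.
Proof.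
  pose proof (Kabs_tri k a L (K0 k)).
  assert (E: forall z, Ksub k z (K0 k) = z).
  { destruct k; unfold Ksub; simpl; intros. ring. destruct z; simpl; f_equal; ring. }
  rewrite !E in H. auto.
Qed.

Lemma Kfield_cancel k (z : Kty k) : Kadd k z z = z -> z = K0 k.
Proof. destruct k; simpl; intros. lra. destruct z; simpl in *. injection H; intros; f_equal; lra. Qed.

Lemma Kadd_opp k (a b : Kty k) : Kadd k a b = K0 k -> b = Kopp k a.
Proof. destruct k; simpl; intros. lra. destruct a, b; simpl in *. injection H; intros; f_equal; lra. Qed.

Lemma Ksub_diag k (a : Kty k) : Ksub k a a = K0 k.
Proof. destruct k; unfold Ksub; simpl. ring. destruct a; simpl; f_equal; ring. Qed.

Lemma Kmul_0 k (a : Kty k) : Kmul k a (K0 k) = K0 k.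
Proof. destruct k; simpl. ring. destruct a; simpl; f_equal; ring. Qed.

Ltac dHE HE := destruct HE as (Hassoc & Hcomm & Hzero & Hopp & Hsmul & Hs1 & Hsd1 & Hsd2 & Hsn0 & Hsntri & Hsnh & Hhaus).

Lemma E_scal0 k (E : LCS k) (HE : is_lcs E) a : vscal E a (vzero E) = vzero E.
Proof.
  dHE HE. set (s := vscal E a (vzero E)).
  assert (Hs : vadd E s s = s).
  { unfold s. rewrite <- Hsd1. rewrite Hzero. reflexivity. }
  transitivity (vadd E (vadd E s s) (vopp E s)).
  - rewrite <- Hassoc, Hopp, Hzero. reflexivity.
  - rewrite Hs, Hopp. reflexivity.
Qed.

Lemma E_sn0 k (E : LCS k) (HE : is_lcs E) i : sn E i (vzero E) = 0.
Proof.
  rewrite <- (E_scal0 k E HE (K0 k)). pose proof HE as HE'. dHE HE'.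
  rewrite Hsnh, Kabs_K0. ring.
Qed.

Lemma E_snxx k (E : LCS k) (HE : is_lcs E) i x : sn E i (vsub E x x) = 0.
Proof. pose proof HE as HE'. dHE HE'. unfold vsub. rewrite Hopp. apply E_sn0; auto. Qed.

Lemma E_subdecomp k (E : LCS k) (HE : is_lcs E) x y z :
  vsub E z x = vadd E (vsub E z y) (vsub E y x).
Proof.
  dHE HE. unfold vsub. rewrite <- Hassoc. f_equal.
  rewrite Hassoc. rewrite (Hcomm (vopp E y) y), Hopp. rewrite Hcomm, Hzero. auto.
Qed.

Lemma E_subtri k (E : LCS k) (HE : is_lcs E) i x y z :
  sn E i (vsub E z x) <= sn E i (vsub E z y) + sn E i (vsub E y x).
Proof.
  rewrite (E_subdecomp k E HE x y z). pose proof HE as HE'. dHE HE'. apply Hsntri.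
Qed.

Lemma E_eq k (E : LCS k) (HE : is_lcs E) x v :
  (forall i, sn E i (vsub E x v) = 0) -> x = v.
Proof.
  intro H. pose proof HE as HE'. dHE HE'. apply Hhaus in H. unfold vsub in H.
  assert (vadd E (vadd E x (vopp E v)) v = x).
  { rewrite <- Hassoc. rewrite (Hcomm (vopp E v) v), Hopp, Hzero. auto. }
  rewrite H, Hcomm, Hzero in H0. auto.
Qed.

Lemma in_ball_refl k (E : LCS k) (HE : is_lcs E) l r x : 0 < r -> in_ball E l r x x.
Proof. intros Hr i _. rewrite E_snxx; auto. Qed.

Lemma list_margin {A} (a : A -> R) r (l : list A) :
  (forall i, In i l -> a i < r) -> exists r', 0 < r' /\ forall i, In i l -> a i + r' < r.
Proof.
  induction l as [|j l IH]; intros H.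
  - exists 1. split. lra. intros i [].
  - destruct IH as [r' [Hr' H']]. intros; apply H; simpl; auto.
    assert (Hj : a j < r) by (apply H; simpl; auto).
    exists (Rmin r' ((r - a j)/2)). split.
    + apply Rmin_pos; lra.
    + intros i [Hi|Hi]; [subst i|].
      * pose proof (Rmin_r r' ((r - a j)/2)). lra.
      * pose proof (Rmin_l r' ((r - a j)/2)). specialize (H' i Hi). lra.
Qed.

Lemma ball_open k (E : LCS k) (HE : is_lcs E) l r x : is_open E (in_ball E l r x).
Proof.
  intros y Hy. destruct (list_margin (fun i => sn E i (vsub E y x)) r l Hy) as [r' [Hr' H']].
  exists l, r'. split; auto. intros z Hz i Hi.
  pose proof (E_subtri k E HE i x y z). specialize (Hz i Hi). specialize (H' i Hi). lra.
Qed.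

Lemma dual_0 k (E : LCS k) (HE : is_lcs E) e : in_dual E e -> e (vzero E) = K0 k.
Proof.
  intros [Ha _]. apply Kfield_cancel. rewrite <- Ha. dHE HE. rewrite Hzero. auto.
Qed.

Lemma dual_opp k (E : LCS k) (HE : is_lcs E) e v : in_dual E e -> e (vopp E v) = Kopp k (e v).
Proof.
  intros He. apply Kadd_opp. destruct He as [Ha Hr]. rewrite <- Ha.
  pose proof HE as HE'. dHE HE'. rewrite Hopp. apply dual_0; auto. split; auto.
Qed.

Lemma dual_sub k (E : LCS k) (HE : is_lcs E) e a b : in_dual E e ->
  e (vsub E a b) = Ksub k (e a) (e b).
Proof.
  intros He. unfold vsub, Ksub. rewrite <- (dual_opp k E HE e b He). destruct He as [Ha _]. apply Ha.
Qed.

Lemma separation k (E : LCS k) (HE : is_lcs E) G (HG : dual_subspace E G)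
  (Hdet : determines_boundedness E G) x v :
  (forall e, G e -> e x = e v) -> x = v.
Proof.
  intros H. apply (E_eq k E HE). intro i.
  set (z := vsub E x v).
  assert (Hz : forall e, G e -> e z = K0 k).
  { intros e Ge. destruct HG as [HGd _]. unfold z. rewrite dual_sub; auto.
    rewrite (H e Ge). apply Ksub_diag. }
  assert (Hb : is_bounded E (fun y => exists t, y = vscal E (KofR k t) z)).
  { apply Hdet. intros e Ge. exists 0. intros y [t ->].
    destruct HG as [HGd _]. destruct (HGd e Ge) as [_ [Hm _]].
    rewrite Hm, Hz, Kmul_0, Kabs_K0 by auto. lra. }
  destruct (Hb i) as [M HM].
  pose proof HE as HE'. dHE HE'. pose proof (Hsn0 i z).
  destruct (Rle_lt_or_eq_dec _ _ H0) as [Hp|]; auto.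
  specialize (HM (vscal E (KofR k ((Rabs M + 1) / sn E i z)) z) (ex_intro _ _ eq_refl)).
  rewrite Hsnh, Kabs_KofR in HM.
  rewrite Rabs_right in HM.
  - unfold Rdiv in HM. rewrite Rmult_assoc, Rinv_l in HM by lra.
    pose proof (Rle_abs M). lra.
  - apply Rle_ge. unfold Rdiv. apply Rmult_le_pos. pose proof (Rabs_pos M); lra. left; apply Rinv_0_lt_compat; lra.
Qed.

Definition Kconv k (a : nat -> Kty k) (L : Kty k) : Prop :=
  forall eps, 0 < eps -> exists K, forall n, (K <= n)%nat -> Kabs k (Ksub k (a n) L) < eps.

Lemma conv_bounded k (a : nat -> Kty k) L : Kconv k a L -> exists M, forall n, Kabs k (a n) <= M.
Proof.
  intros H. destruct (H 1 Rlt_0_1) as [K HK].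
  assert (Hf : forall K, exists M0, forall n, (n < K)%nat -> Kabs k (a n) <= M0).
  { induction K0 as [|K0 [M0 HM0]].
    - exists 0. intros n Hn. inversion Hn.
    - exists (Rmax M0 (Kabs k (a K0))). intros n Hn.
      destruct (Nat.eq_dec n K0) as [->|Hne]. apply Rmax_r.
      eapply Rle_trans; [apply HM0; lia|apply Rmax_l]. }
  destruct (Hf K) as [M0 HM0]. exists (Rmax M0 (1 + Kabs k L)). intro n.
  destruct (Nat.lt_ge_cases n K).
  - eapply Rle_trans; [apply HM0; auto|apply Rmax_l].
  - eapply Rle_trans; [|apply Rmax_r]. pose proof (Kabs_bound k (a n) L). specialize (HK n H0). lra.
Qed.

Definition is_cluster k (E : LCS k) (u : nat -> car E) (S : nat -> Prop) (w : car E) : Prop :=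
  forall l r, 0 < r -> forall K, exists n, (K <= n)%nat /\ S n /\ in_ball E l r w (u n).

Lemma cluster k (E : LCS k) (HE : is_lcs E) (HM : semi_Montel E) G
  (Hdet : determines_boundedness E G) (u : nat -> car E) (S : nat -> Prop) :
  (forall e, G e -> exists M, forall n, Kabs k (e (u n)) <= M) ->
  (forall K, exists n, (K <= n)%nat /\ S n) ->
  exists w, is_cluster k E u S w.
Proof.
  intros Hwb Hinf.
  set (A := fun y => exists n, S n /\ y = u n).
  assert (HA : is_bounded E A).
  { apply Hdet. intros e Ge. destruct (Hwb e Ge) as [M HM0]. exists M. intros y [n [_ ->]]. auto. }
  specialize (HM A HA). apply NNPP. intro Hn.
  assert (Hw : forall w, exists l r K, 0 < r /\
            forall n, (K <= n)%nat -> S n -> ~ in_ball E l r w (u n)).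
  { intro w. apply NNPP. intro H'. apply Hn. exists w. intros l r Hr K.
    apply NNPP. intro H''. apply H'. exists l, r, K. split; auto.
    intros n0 Hn1 Hn2 Hb. apply H''. eauto. }
  set (C := fun U : car E -> Prop => exists w l r K, 0 < r /\ U = in_ball E l r w /\
            forall n, (K <= n)%nat -> S n -> ~ in_ball E l r w (u n)).
  destruct (HM C) as [L [HL1 HL2]].
  - intros U [w [l [r [K [Hr [-> _]]]]]]. apply ball_open; auto.
  - intros x _. destruct (Hw x) as [l [r [K [Hr HK]]]]. exists (in_ball E l r x).
    split. exists x, l, r, K. auto. apply in_ball_refl; auto.
  - assert (HK : exists K, forall U, In U L -> forall n, (K <= n)%nat -> S n -> ~ U (u n)).
    { clear HL2. induction L as [|U0 L IH].
      - exists 0%nat. intros U [].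
      - destruct IH as [K1 HK1]. intros; apply HL1; simpl; auto.
        destruct (HL1 U0 (or_introl eq_refl)) as [w [l [r [K0 [Hr [-> HK0]]]]]].
        exists (max K0 K1). intros U [HU|HU] n Hn0; [subst U|].
        + apply HK0. lia.
        + apply HK1; auto. lia. }
    destruct HK as [K HK]. destruct (Hinf K) as [n [Hn1 Hn2]].
    destruct (HL2 (u n)) as [U [HU1 HU2]].
    + intros l r Hr. exists (u n). split. exists n; auto. apply in_ball_refl; auto.
    + exact (HK U HU1 n Hn1 Hn2 HU2).
Qed.

Lemma cluster_val k (E : LCS k) (HE : is_lcs E) u S w e L :
  is_cluster k E u S w -> in_dual E e -> Kconv k (fun n => e (u n)) L -> e w = L.
Proof.
  intros Hc He Hconv. apply Kabs_small. intros eps Heps.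
  destruct He as [_ [_ Hct]]. destruct (Hct w (eps/2)) as [l [r [Hr Hb]]]; [lra|].
  destruct (Hconv (eps/2)) as [K HK]; [lra|].
  destruct (Hc l r Hr K) as [n [Hn [_ Hin]]].
  specialize (Hb _ Hin). specialize (HK n Hn).
  pose proof (Kabs_tri k (e w) (e (u n)) L). rewrite Kabs_sym in Hb. lra.
Qed.

Lemma wlim k (E : LCS k) (HE : is_lcs E) (HM : semi_Montel E) G (HG : dual_subspace E G)
  (Hdet : determines_boundedness E G) (u : nat -> car E) :
  (forall e, G e -> exists L, Kconv k (fun n => e (u n)) L) ->
  exists w, forall e, G e -> forall L, Kconv k (fun n => e (u n)) L -> e w = L.
Proof.
  intros H. destruct (cluster k E HE HM G Hdet u (fun _ => True)) as [w Hw].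
  - intros e Ge. destruct (H e Ge) as [L HL]. apply (conv_bounded k _ L HL).
  - intro K. exists K. auto.
  - exists w. intros e Ge L HL. eapply cluster_val; eauto. destruct HG as [HGd _]. auto.
Qed.

Lemma slim k (E : LCS k) (HE : is_lcs E) (HM : semi_Montel E) G (HG : dual_subspace E G)
  (Hdet : determines_boundedness E G) (u : nat -> car E) v :
  (forall e, G e -> Kconv k (fun n => e (u n)) (e v)) ->
  forall j eps, 0 < eps -> exists K, forall n, (K <= n)%nat -> sn E j (vsub E (u n) v) < eps.
Proof.
  intros H j eps Heps. apply NNPP. intro Hn.
  set (S := fun n => eps <= sn E j (vsub E (u n) v)).
  assert (Hinf : forall K, exists n, (K <= n)%nat /\ S n).
  { intro K. apply NNPP. intro H'. apply Hn. exists K. intros n Hn1.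
    apply Rnot_le_lt. intro H''. apply H'. exists n. auto. }
  destruct (cluster k E HE HM G Hdet u S) as [w Hw]; auto.
  - intros e Ge. apply (conv_bounded k _ (e v)). auto.
  - assert (w = v).
    { apply (separation k E HE G HG Hdet). intros e Ge. eapply cluster_val; eauto.
      destruct HG as [HGd _]. auto. }
    subst w. destruct (Hw (j :: nil) eps Heps 0%nat) as [n [_ [HS Hb]]].
    specialize (Hb j (or_introl eq_refl)). unfold S in HS. lra.
Qed.

Lemma shift_close d (x : point d) n h jj : Rabs (shift x n h jj - x jj) <= Rabs h.
Proof.
  unfold shift. destruct (Fin.eq_dec jj n).
  - replace (x jj + h - x jj) with h by ring. lra.
  - replace (x jj - x jj) with 0 by ring. rewrite Rabs_R0. apply Rabs_pos.
Qed.

Lemma Ck_ext V vs rsc J q d Om (HOm : @open_Rd d Om) m : forall f1 f2,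
  (forall x, Om x -> f1 x = f2 x) -> Ck V vs rsc J q d Om m f1 -> Ck V vs rsc J q d Om m f2.
Proof.
  induction m as [|m IH]; intros f1 f2 H Hc.
  - intros x Hx j eps He. destruct (Hc x Hx j eps He) as [del [Hd H']].
    exists del; split; auto. intros y Hy Hyx. rewrite <- !H by auto. apply H'; auto.
  - destruct Hc as [g [Hp Hg]]. exists g; split; auto.
    intros n x Hx j eps He. destruct (Hp n x Hx j eps He) as [del [Hd H']].
    destruct (HOm x Hx) as [r [Hr Hr']]. exists (Rmin del r). split.
    + apply Rmin_pos; auto.
    + intros h hne hlt. rewrite <- !H by (auto; apply Hr'; intro jj;
         pose proof (shift_close d x n h jj); pose proof (Rmin_r del r); lra).
      apply H'; auto. pose proof (Rmin_l del r); lra.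
Qed.

Lemma inv_small del : 0 < del -> exists K, forall n, (K <= n)%nat -> / (INR n + 1) < del.
Proof.
  intros Hd. destruct (archimed_cor1 del Hd) as [N [HN HN0]]. exists N. intros n Hn.
  eapply Rle_lt_trans; [|apply HN]. apply Rlt_le. apply Rinv_lt_contravar.
  - apply Rmult_lt_0_compat. apply lt_0_INR; lia. pose proof (pos_INR n); lra.
  - apply le_INR in Hn. lra.
Qed.

Lemma inv_pos n : 0 < / (INR n + 1).
Proof. apply Rinv_0_lt_compat. pose proof (pos_INR n); lra. Qed.

Lemma case0 k (E : LCS k) (HE : is_lcs E) (HM : semi_Montel E) G (HG : dual_subspace E G)
  (Hdet : determines_boundedness E G) d (Om : point d -> Prop) f :
  (forall e, G e -> CkK k d Om 0 (fun x => e (f x))) -> CkE E d Om 0 f.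
Proof.
  intros Hf x Hx j eps Heps. apply NNPP; intro Hn.
  assert (Hy : forall N : nat, exists y, Om y /\ (forall mm, Rabs (y mm - x mm) < / (INR N + 1)) /\
             eps <= sn E j (vsub E (f y) (f x))).
  { intro N. apply NNPP. intro H'. apply Hn. exists (/ (INR N + 1)). split. apply inv_pos.
    intros y Hy1 Hy2. apply Rnot_le_lt. intro H''. apply H'. exists y. auto. }
  set (y := fun N => proj1_sig (constructive_indefinite_description _ (Hy N))).
  assert (Hyp : forall N, Om (y N) /\ (forall mm, Rabs (y N mm - x mm) < / (INR N + 1)) /\
             eps <= sn E j (vsub E (f (y N)) (f x))).
  { intro N. exact (proj2_sig (constructive_indefinite_description _ (Hy N))). }
  destruct (slim k E HE HM G HG Hdet (fun N => f (y N)) (f x)) with (j := j) (eps := eps)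
    as [K HK]; auto.
  - intros e Ge eps' Heps'. destruct (Hf e Ge x Hx tt eps' Heps') as [del [Hdel Hc]].
    destruct (inv_small del Hdel) as [K HK]. exists K. intros n Hn0.
    destruct (Hyp n) as [Ho [Hc2 _]]. apply Hc; auto. intro mm. specialize (Hc2 mm).
    specialize (HK n Hn0). lra.
  - specialize (HK K (le_n K)). destruct (Hyp K) as [_ [_ H3]]. simpl in HK. lra.
Qed.

Definition Dq k (E : LCS k) d (f : point d -> car E) n x h : car E :=
  vscal E (KofR k (/ h)) (vsub E (f (shift x n h)) (f x)).

Definition hasPE k (E : LCS k) d (f : point d -> car E) n x v :=
  has_partial (car E) (vsub E) (fun h x => vscal E (KofR k h) x) (idx E) (sn E) d f n x v.

Definition hasPK k d (g : point d -> Kty k) n x L :=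
  has_partial (Kty k) (Ksub k) (fun h z => Kmul k (KofR k h) z) unit (fun _ z => Kabs k z) d g n x L.

Lemma conv_Dq k (E : LCS k) (HE : is_lcs E) d f n x e L (hs : nat -> R) :
  in_dual E e -> hasPK k d (fun y => e (f y)) n x L ->
  (forall N, hs N <> 0) -> (forall del, 0 < del -> exists K, forall N, (K <= N)%nat -> Rabs (hs N) < del) ->
  Kconv k (fun N => e (Dq k E d f n x (hs N))) L.
Proof.
  intros He Hp Hnz Hsm eps Heps. destruct (Hp tt eps Heps) as [del [Hd H']].
  destruct (Hsm del Hd) as [K HK]. exists K. intros N HN.
  unfold Dq. destruct He as [Ha [Hm Hc]]. rewrite Hm.
  rewrite (dual_sub k E HE e) by (split; auto). apply H'; auto.
Qed.

Lemma partial_exists k (E : LCS k) (HE : is_lcs E) (HM : semi_Montel E) G (HG : dual_subspace E G)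
  (Hdet : determines_boundedness E G) d (Om : point d -> Prop) f :
  (forall e, G e -> exists ge : Fin.t d -> point d -> Kty k,
      forall n x, Om x -> hasPK k d (fun y => e (f y)) n x (ge n x)) ->
  forall n x, Om x -> exists v, hasPE k E d f n x v /\
    forall e, G e -> forall L, hasPK k d (fun y => e (f y)) n x L -> e v = L.
Proof.
  intros Hf n x Hx.
  assert (HGd : forall e, G e -> in_dual E e) by (destruct HG; auto).
  assert (Hs1 : forall del, 0 < del -> exists K, forall N, (K <= N)%nat -> Rabs (/ (INR N + 1)) < del).
  { intros del Hd. destruct (inv_small del Hd) as [K HK]. exists K. intros N HN.
    rewrite Rabs_right. auto. apply Rle_ge, Rlt_le, inv_pos. }
  assert (Hs0 : forall N, / (INR N + 1) <> 0) by (intro N; apply Rgt_not_eq, inv_pos).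
  destruct (wlim k E HE HM G HG Hdet (fun N => Dq k E d f n x (/ (INR N + 1)))) as [w Hw].
  { intros e Ge. destruct (Hf e Ge) as [ge Hge]. exists (ge n x).
    apply conv_Dq; auto. }
  exists w. split.
  - intros j eps Heps. apply NNPP; intro Hn.
    assert (Hh : forall N : nat, exists h, h <> 0 /\ Rabs h < / (INR N + 1) /\
               eps <= sn E j (vsub E (Dq k E d f n x h) w)).
    { intro N. apply NNPP. intro H'. apply Hn. exists (/ (INR N + 1)). split. apply inv_pos.
      intros h Hh1 Hh2. apply Rnot_le_lt. intro H''. apply H'. exists h. auto. }
    set (hs := fun N => proj1_sig (constructive_indefinite_description _ (Hh N))).
    assert (Hhs : forall N, hs N <> 0 /\ Rabs (hs N) < / (INR N + 1) /\
               eps <= sn E j (vsub E (Dq k E d f n x (hs N)) w)).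
    { intro N. exact (proj2_sig (constructive_indefinite_description _ (Hh N))). }
    destruct (slim k E HE HM G HG Hdet (fun N => Dq k E d f n x (hs N)) w) with (j := j) (eps := eps)
      as [K HK]; auto.
    + intros e Ge. destruct (Hf e Ge) as [ge Hge].
      rewrite (Hw e Ge (ge n x)) by (apply conv_Dq; auto).
      apply conv_Dq; auto. intro N; apply Hhs.
      intros del Hd. destruct (inv_small del Hd) as [K HK]. exists K. intros N HN.
      destruct (Hhs N) as [_ [H2 _]]. specialize (HK N HN). lra.
    + specialize (HK K (le_n K)). destruct (Hhs K) as [_ [_ H3]]. simpl in HK. lra.
  - intros e Ge L HL. apply Hw; auto. apply conv_Dq; auto.
Qed.

Lemma main_ind k (E : LCS k) (HE : is_lcs E) (HM : semi_Montel E) G (HG : dual_subspace E G)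
  (Hdet : determines_boundedness E G) d (Om : point d -> Prop) (HOm : open_Rd Om) m :
  forall f, (forall e, G e -> CkK k d Om m (fun x => e (f x))) -> CkE E d Om m f.
Proof.
  induction m as [|m IH]; intros f Hf.
  - apply case0 with G; auto.
  - assert (Hex := partial_exists k E HE HM G HG Hdet d Om f).
    set (P := fun n x v => hasPE k E d f n x v /\
         forall e, G e -> forall L, hasPK k d (fun y => e (f y)) n x L -> e v = L).
    set (g := fun n x => epsilon (inhabits (vzero E)) (P n x)).
    assert (Hg : forall n x, Om x -> P n x (g n x)).
    { intros n x Hx. apply epsilon_spec. apply Hex; auto.
      intros e Ge. destruct (Hf e Ge) as [ge [Hge _]]. exists ge. exact Hge. }
    exists g. split.
    + intros n x Hx. apply (Hg n x Hx).
    + intro n. apply IH. intros e Ge. destruct (Hf e Ge) as [ge [Hge1 Hge2]].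
      apply (Ck_ext _ _ _ _ _ d Om HOm m (ge n)); [|apply Hge2].
      intros x Hx. symmetry. apply (proj2 (Hg n x Hx) e Ge). apply Hge1; auto.
Qed.

Theorem mainTheorem12 (k : Kfield) (E : LCS k) (HE : is_lcs E)
  (HM : semi_Montel E)
  (G : (car E -> Kty k) -> Prop) (HG : dual_subspace E G)
  (Hdet : determines_boundedness E G)
  (d : nat) (Om : point d -> Prop) (HOm : open_Rd Om)
  (m : nat) (Hm : (1 <= m)%nat)
  (f : point d -> car E)
  (Hf : forall e, G e -> CkK k d Om m (fun x => e (f x))) :
  CkE E d Om m f.
Proof.
  exact (main_ind k E HE HM G HG Hdet d Om HOm m f Hf).
Qed.
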